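(* Let $\beta=\frac{1}{16}$, let $S$ be a string of length $n$, let $d\ge1$, and let $1\le x<y\le n$ with $y-x+1$ even. Let $p_1,\dots,p_{2\log n}$ be primes chosen independently and uniformly at random from the primes in $\left[\frac{d}{\beta}\log^2 n,\frac{34d}{\beta}\log^2 n\right]$. Then: (1) If $\mathsf{HAM}(S[x,y],S[x,y]^R)\le d$, then $\Delta(x,y)\le d$. (2) If $\mathsf{HAM}(S[x,y],S[x,y]^R)\ge 2d$, then $\Delta(x,y)>(1+\beta)d$ with probability at least $1-\frac{1}{n^3}$.
   Context: $S[x,y]=S[x]S[x+1]\cdots S[y]$; for a string $T$ of length $m$, $T^R$ is its reverse and $\mathsf{HAM}(T,T^R)=|\{i: T[i]\neq T[m+1-i]\}|$. A position $i\in[x,y]$ is a mismatch of $S[x,y]$ if $S[i]\neq S[x+y-i]$ (so $\mathsf{HAM}(S[x,y],S[x,y]^R)$ is the number of mismatch positions). For each $j$, $\Delta_j(x,y)$ is the number of residues $r\in\{0,1,\dots,p_j-1\}$ such that the first-level subpattern of $S[x,y]$ at positions $\equiv r\pmod{p_j}$ differs from its mirrored counterpart, i.e. such that there is a mismatch position $i\in[x,y]$ with $i\equiv r \pmod{p_j}$. $\Delta(x,y)=\max_j\Delta_j(x,y)$. $\log$ is base 2. *)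

(* Defs.v *)
From Stdlib Require Import Reals.
From mathcomp Require Import all_boot.
Set Implicit Arguments. Unset Strict Implicit. Unset Printing Implicit Defensive.

(* A string of length n is S : nat -> T, read at positions 1..n only. *)

Definition mismatch (T : eqType) (S : nat -> T) (x y i : nat) : bool :=
  (x <= i <= y) && (S i != S (x + y - i)).

Definition HAM_rev (T : eqType) (S : nat -> T) (x y : nat) : nat :=
  count (mismatch S x y) (iota x (y - x + 1)).

Definition Delta_p (T : eqType) (S : nat -> T) (x y p : nat) : nat :=
  count (fun r => has (fun i => mismatch S x y i && (i %% p == r))
                      (iota x (y - x + 1)))
        (iota 0 p).

Definition Delta (T : eqType) (S : nat -> T) (x y k : nat) (ps : 'I_k -> nat)
  : nat := \max_(j < k) Delta_p S x y (ps j).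

Definition log2R (n : nat) : R := Rdiv (ln (INR n)) (ln 2).

(* p lies in [ (d/beta) log^2 n , (34 d/beta) log^2 n ] with beta = 1/16 *)
Definition in_range (d n p : nat) : bool :=
  (if Rle_dec (Rmult (Rmult 16 (INR d)) (pow (log2R n) 2)) (INR p) then true else false) &&
  (if Rle_dec (INR p) (Rmult (Rmult 544 (INR d)) (pow (log2R n) 2)) then true else false).

(* number of primes: ceil(2 log2 n) = least k with n^2 <= 2^k *)
Definition num_primes (n : nat) : nat := up_log 2 (n ^ 2).

(* a nat bound strictly above every element of the prime interval
   (since log2 n <= up_log 2 n) *)
Definition prime_bound (d n : nat) : nat := 544 * d * (up_log 2 n) ^ 2 + 1.

(* the sample space: num_primes n primes, each from the primes in the range *)
Definition valid_choice (d n : nat)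
  (f : {ffun 'I_(num_primes n) -> 'I_(prime_bound d n)}) : bool :=
  [forall j, prime (f j) && in_range d n (f j)].

Arguments valid_choice d n f : clear implicits.

(* Main.v *)
From Stdlib Require Import Reals Lra Lia Psatz.
Require Import Defs.
From mathcomp Require Import all_boot zify.
Section RealPart.
Local Open Scope R_scope.

Lemma INR_expn (m k : nat) : INR (m ^ k)%N = INR m ^ k.
Proof. elim: k => [|k IH] //=; by rewrite expnS mult_INR IH. Qed.

Lemma log2R_bounds (n t : nat) : (2 ^ t <= n < 2 ^ t.+1)%N ->
  (INR t <= log2R n /\ log2R n < INR t + 1).
Proof.
move=> /andP[h1 h2].
have l2 : (0 < ln 2) by have := ln_lt_2; lra.
have npos : (0 < INR n).
  apply: lt_0_INR; apply/ltP; apply: leq_trans h1; exact: expn_gt0.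
have e1 : (2 ^ t <= INR n).
  have -> : 2 = INR 2 by []. rewrite -INR_expn; apply: le_INR; exact/leP.
have e2 : (INR n < 2 ^ t.+1).
  have -> : 2 = INR 2 by []. rewrite -INR_expn; apply: lt_INR; exact/ltP.
have p1 : (0 < 2 ^ t) by apply: pow_lt; lra.
have f1 : (INR t * ln 2 <= ln (INR n)).
  rewrite -ln_pow; last lra.
  case: (Rle_lt_or_eq_dec _ _ e1) => h.
    left; exact: ln_increasing.
  by rewrite h; right.
have f2 : (ln (INR n) < (INR t + 1) * ln 2).
  have -> : (INR t + 1 = INR t.+1) by rewrite S_INR.
  rewrite -ln_pow; last lra.
  exact: ln_increasing.
rewrite /log2R; split.
  apply/(Rmult_le_reg_r (ln 2)) => //. rewrite /Rdiv Rmult_assoc Rinv_l; lra.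
apply/(Rmult_lt_reg_r (ln 2)) => //. rewrite /Rdiv Rmult_assoc Rinv_l; lra.
Qed.

Lemma in_range_lo (d n t p : nat) : (2 ^ t <= n < 2 ^ t.+1)%N ->
  in_range d n p -> (16 * d * (t * t) <= p)%N.
Proof.
move=> /log2R_bounds [h1 h2].
rewrite /in_range; case: Rle_dec => // H _.
apply/leP; apply: INR_le.
rewrite !mult_INR.
have ht : (0 <= INR t) by apply: pos_INR.
have hd : (0 <= INR d) by apply: pos_INR.
have : (INR t * INR t <= log2R n ^ 2) by nra.
have e2 : INR 16 = 16 by rewrite INR_IZR_INZ.
rewrite e2; nra.
Qed.

Lemma in_range_hi (d n t p : nat) : (2 ^ t <= n < 2 ^ t.+1)%N -> (10 <= t)%N ->
  (16 * d * (t.+1 * t.+1) <= p <= 384 * d * (t.+1 * t.+1))%N -> in_range d n p.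
Proof.
move=> /log2R_bounds [h1 h2] ht10 /andP[p1 p2].
have q : (384 * d * (t.+1 * t.+1) <= 544 * d * (t * t))%N by nia.
have p2' := leq_trans p2 q.
move/leP: p1 => /le_INR; move/leP: p2' => /le_INR.
have e1 : INR 544 = 544 by rewrite INR_IZR_INZ.
have e2 : INR 16 = 16 by rewrite INR_IZR_INZ.
rewrite !mult_INR e1 e2 !S_INR => a b.
have ht : (0 <= INR t) by apply: pos_INR.
have hd : (0 <= INR d) by apply: pos_INR.
have hl : (0 <= log2R n) by lra.
rewrite /in_range; case: Rle_dec => H1; case: Rle_dec => H2 //.
- exfalso; apply: H2.
  have h3 : INR t * INR t <= log2R n ^ 2 by nra.
  have h4 : INR d * (INR t * INR t) <= INR d * log2R n ^ 2 by apply: Rmult_le_compat_l.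
  nra.
- exfalso; apply: H1.
  have h3 : log2R n ^ 2 <= (INR t + 1) * (INR t + 1) by nra.
  have h4 : INR d * log2R n ^ 2 <= INR d * ((INR t + 1) * (INR t + 1)) by apply: Rmult_le_compat_l.
  nra.
- exfalso; apply: H1.
  have h3 : log2R n ^ 2 <= (INR t + 1) * (INR t + 1) by nra.
  have h4 : INR d * log2R n ^ 2 <= INR d * ((INR t + 1) * (INR t + 1)) by apply: Rmult_le_compat_l.
  nra.
Qed.
End RealPart.

Section Comb.
Variables (T : eqType) (S : nat -> T) (x y : nat).

Definition Ms := filter (mismatch S x y) (iota x (y - x + 1)).

Lemma HAM_size : HAM_rev S x y = size Ms.
Proof. by rewrite /HAM_rev /Ms size_filter. Qed.

Lemma Delta_p_le p : Delta_p S x y p <= HAM_rev S x y.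
Proof.
rewrite /Delta_p -size_filter HAM_size.
rewrite -(size_map (modn^~ p)).
apply: uniq_leq_size; first by rewrite filter_uniq // iota_uniq.
move=> r; rewrite mem_filter => /andP[/hasP[i iin /andP[mi /eqP <-]] _].
by apply/mapP; exists i => //; rewrite /Ms mem_filter mi.
Qed.

Lemma Delta_p_ge p s : 0 < p -> {subset s <= Ms} ->
  size (undup (map (modn^~ p) s)) <= Delta_p S x y p.
Proof.
move=> p0 sub; rewrite /Delta_p -size_filter.
apply: uniq_leq_size; first exact: undup_uniq.
move=> r; rewrite mem_undup => /mapP[i iin ->].
have /andP[mi ii] : mismatch S x y i && (i \in iota x (y - x + 1)).
  by rewrite -mem_filter; exact: sub.
rewrite mem_filter mem_iota add0n ltn_pmod // andbT.
rewrite andbT; by apply/hasP; exists i => //; rewrite mi eqxx.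
Qed.

Lemma Ms_sorted : sorted ltn Ms.
Proof. apply: sorted_filter; [exact: ltn_trans | exact: iota_ltn_sorted]. Qed.

Lemma Ms_range i : x <= y -> i \in Ms -> x <= i <= y.
Proof.
move=> xy.
rewrite /Ms mem_filter mem_iota => /andP[_ /andP[h1 h2]].
by rewrite h1 /=; lia.
Qed.

End Comb.

Fixpoint coll (p : nat) (s : seq nat) : nat :=
  if s is a :: s' then count (fun b => p %| b - a) s' + coll p s' else 0.

Lemma coll_bound p s : sorted ltn s ->
  size s <= size (undup (map (modn^~ p) s)) + coll p s.
Proof.
elim: s => [|a s IH] //= hs.
have hs' : sorted ltn s := path_sorted hs.
have ha : all (ltn a) s := order_path_min ltn_trans hs.
have := IH hs'.
case: ifP => hin.
  move: hin => /mapP[b bin eqb].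
  have : 0 < count (fun b0 => p %| b0 - a) s.
    rewrite -has_count; apply/hasP; exists b => //.
    have ab : a <= b by have := allP ha b bin => /ltnW.
    by rewrite -eqn_mod_dvd // eq_sym eqb.
  set c := count _ s; set k := coll p s; set u := size (undup _); clearbody c k u; lia.
rewrite /=; set c := count _ s; set k := coll p s; set u := size (undup _); clearbody c k u; lia.
Qed.

Lemma coll_pos p s : sorted ltn s -> 0 < coll p s ->
  exists a b, [/\ a \in s, b \in s, a < b & p %| b - a].
Proof.
elim: s => [|a s IH] //= hs.
have hs' : sorted ltn s := path_sorted hs.
have ha : all (ltn a) s := order_path_min ltn_trans hs.
case h0 : (0 < count (fun b => p %| b - a) s).
  move: h0; rewrite -has_count => /hasP[b bin hb] _.
  exists a, b; split => //; first by rewrite inE eqxx.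
    by rewrite inE bin orbT.
  exact: (allP ha).
move=> h; have [|a' [b' [h1 h2 h3 h4]]] := IH hs'; first by lia.
by exists a', b'; split => //; rewrite inE ?h1 ?h2 orbT.
Qed.

Lemma coprime_prod q (Bs : seq nat) (P : pred nat) : prime q -> q \notin Bs ->
  all prime Bs -> coprime q (\prod_(q' <- Bs | P q') q').
Proof.
move=> pq; elim: Bs => [|a Bs IH]; first by rewrite big_nil coprimen1.
rewrite inE negb_or => /andP[qa qB] /= /andP[pa pB].
rewrite big_cons; case: ifP => _; last exact: IH.
rewrite coprimeMr IH // andbT prime_coprime // dvdn_prime2 //.
Qed.

Lemma prod_dvd (Bs : seq nat) D : uniq Bs -> all prime Bs ->
  \prod_(q <- Bs | q %| D) q %| D.
Proof.
elim: Bs => [|a Bs IH]; first by rewrite big_nil dvd1n.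
move=> /= /andP[aB uB] /andP[pa pB].
rewrite big_cons; case: ifP => hD; last exact: IH.
by rewrite Gauss_dvd ?coprime_prod // hD IH.
Qed.

Lemma prod_count (Bs : seq nat) a s n : uniq Bs -> all prime Bs ->
  all (ltn a) s -> (forall i, i \in s -> i <= n) ->
  \prod_(q <- Bs) q ^ count (fun b => q %| b - a) s <= n ^ size s.
Proof.
move=> uB pB; elim: s => [|b s IH] /= hs hn.
  by rewrite big1 // => q _; rewrite expn0.
move/andP: hs => [ab hs].
rewrite expnS.
under eq_bigr => q _ do rewrite expnD.
rewrite big_split /=; apply: leq_mul; last first.
  by apply: IH => // i ii; apply: hn; rewrite inE ii orbT.
have hb : b <= n by apply: hn; rewrite inE eqxx.
apply: (@leq_trans (b - a)); last by lia.
have -> : \prod_(i <- Bs) i ^ (i %| b - a) = \prod_(q <- Bs | q %| b - a) q.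
  by rewrite [RHS]big_mkcond; apply: eq_bigr => q _; case: (q %| b - a).
apply: dvdn_leq; first by lia.
exact: prod_dvd.
Qed.

Lemma prod_coll (Bs : seq nat) s n : uniq Bs -> all prime Bs -> sorted ltn s ->
  (forall i, i \in s -> i <= n) -> 0 < n ->
  \prod_(q <- Bs) q ^ coll q s <= n ^ (size s * size s).
Proof.
move=> uB pB; elim: s => [|a s IH] /= hs hn n0.
  by rewrite big1 // => q _; rewrite expn0.
have hs' : sorted ltn s := path_sorted hs.
have ha : all (ltn a) s := order_path_min ltn_trans hs.
under eq_bigr => q _ do rewrite expnD.
rewrite big_split /=.
apply: (@leq_trans (n ^ size s * n ^ (size s * size s))).
  apply: leq_mul; first by apply: prod_count => // i ii; apply: hn; rewrite inE ii orbT.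
  by apply: IH => // i ii; apply: hn; rewrite inE ii orbT.
rewrite -expnD; apply: leq_pexp2l => //; lia.
Qed.

Lemma prod_widen_one n1 n2 (P : pred nat) (F : nat -> nat) : n1 <= n2 ->
  (forall i, P i -> n1 <= i -> F i = 1) ->
  \prod_(0 <= i < n1 | P i) F i = \prod_(0 <= i < n2 | P i) F i.
Proof.
move=> le h; rewrite (big_nat_widen _ _ _ _ _ le).
rewrite big_mkcond [RHS]big_mkcond; apply: eq_bigr => i _.
case: (P i) (h i) => //= h'; case: ltnP => // hi; by rewrite h'.
Qed.

Lemma factorization N X : 0 < N ->
  (forall p, prime p -> X <= p -> logn p N = 0) ->
  N = \prod_(0 <= p < X | prime p) p ^ logn p N.
Proof.
move=> N0 hX.
have E : N = \prod_(0 <= p < N.+1 | prime p) p ^ logn p N.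
  rewrite -{1}(partnT N0) /partn big_mkcond [RHS]big_mkcond.
  apply: eq_bigr => p _ /=.
  by case pp: (prime p) => //; rewrite lognE pp.
have hN : forall p, prime p -> N.+1 <= p -> p ^ logn p N = 1.
  move=> p pp hp; rewrite lognE pp N0 /=.
  by rewrite gtnNdvd //; lia.
case: (leqP X N.+1) => hXN.
  rewrite {1}E; symmetry; apply: prod_widen_one => // p pp hp.
  by rewrite hX.
rewrite {1}E; apply: prod_widen_one => //; exact: ltnW.
Qed.

Lemma logn_C p m : prime p ->
  logn p 'C(m.*2, m) + (logn p m`!).*2 = logn p (m.*2)`!.
Proof.
move=> pp.
have hm : m <= m.*2 by rewrite -addnn leq_addl.
have := bin_fact hm.
have -> : m.*2 - m = m by rewrite -addnn addnK.
move=> <-.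
rewrite lognM ?bin_gt0 ?leq_addl ?muln_gt0 ?fact_gt0 // lognM ?fact_gt0 //.
by rewrite addnn.
Qed.

Lemma sum_le_min e N : \sum_(1 <= k < N) (k <= e) = minn N.-1 e.
Proof.
elim: N => [|N IH]; first by rewrite big_geq //; lia.
case: N IH => [|N] IH; first by rewrite big_geq //; lia.
rewrite big_nat_recr //= IH /=; case: leqP => h; lia.
Qed.

Lemma logn_C_le p m : prime p -> 0 < m -> p ^ logn p 'C(m.*2, m) <= m.*2.
Proof.
move=> pp m0.
have p1 : 1 < p by apply: prime_gt1.
set e := trunc_log p m.*2.
have he : p ^ e <= m.*2 by apply: trunc_logP => //; lia.
have he2 : m.*2 < p ^ e.+1 by apply: trunc_log_ltn.
have eN : e <= m.*2 by have := ltn_expl e p1; lia.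
apply: leq_trans he; apply: leq_pexp2l; first by lia.
have L := @logn_C p m pp.
rewrite !logn_fact // in L.
have W : \sum_(1 <= k < m.+1) m %/ p ^ k = \sum_(1 <= k < m.*2.+1) m %/ p ^ k.
  rewrite [RHS](@big_cat_nat _ _ _ m.+1) //=; last by lia.
  rewrite [X in _ + X]big1_seq ?addn0 // => k /andP[_].
  rewrite mem_index_iota => /andP[hk _]; apply: divn_small.
  by apply: leq_trans (ltn_expl k p1); lia.
rewrite W in L.
have B : \sum_(1 <= k < m.*2.+1) m.*2 %/ p ^ k <=
         \sum_(1 <= k < m.*2.+1) (2 * (m %/ p ^ k) + (k <= e)).
  apply: leq_sum => k _.
  have q0 : 0 < p ^ k by rewrite expn_gt0; lia.
  case: (leqP k e) => hk /=.
    rewrite addn1 -ltnS ltn_divLR //.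
    have := ltn_ceil m q0; move: (m %/ p ^ k) (p ^ k) => a q; nia.
  have hq : m.*2 < p ^ k.
    apply: leq_trans he2 _; apply: leq_pexp2l => //; lia.
  by rewrite divn_small.
rewrite big_split /= -big_distrr /= sum_le_min in B.
move: L B; set s1 := \sum_(_ <= _ < _) _; set s2 := \sum_(_ <= _ < _) _.
move=> L B; lia.
Qed.

Lemma C_fact m : 0 < m ->
  'C(m.*2, m) = \prod_(0 <= p < m.*2.+1 | prime p) p ^ logn p 'C(m.*2, m).
Proof.
move=> m0; apply: factorization; first by rewrite bin_gt0 -addnn leq_addl.
move=> p pp hp.
have := logn_C_le p m pp m0.
case: (logn p _) => // v hv.
have : p <= p ^ v.+1 by rewrite -{1}(expn1 p); apply: leq_pexp2l => //; lia.
lia.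
Qed.

Lemma C_lower m : 2 ^ m <= 'C(m.*2, m).
Proof.
elim: m => [|m IH] //.
rewrite doubleS expnS.
rewrite binS.
have h1 : 'C(m.*2, m) <= 'C(m.*2.+1, m.+1) by rewrite binS leq_addl.
have h2 : 'C(m.*2, m) <= 'C(m.*2.+1, m).
  case: m {IH h1} => [|m] //; by rewrite binS leq_addr.
lia.
Qed.

Lemma C_upper m : 'C(m.*2, m) <= 4 ^ m.
Proof.
have -> : 4 ^ m = (1 + 1) ^ m.*2 by rewrite -mul2n expnM.
rewrite expnDn.
have hm : m < m.*2.+1 by lia.
rewrite (bigD1 (Ordinal hm)) //= !exp1n !muln1; exact: leq_addr.
Qed.

Lemma logn_C_pos p m : prime p -> m < p <= m.*2 -> 0 < logn p 'C(m.*2, m).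
Proof.
move=> pp /andP[h1 h2].
have L := @logn_C p m pp.
have z : logn p m`! = 0.
  rewrite logn_fact // big1_seq // => k /andP[_].
  rewrite mem_index_iota => /andP[hk _]; apply: divn_small.
  apply: leq_trans h1 _; rewrite -{1}(expn1 p); apply: leq_pexp2l; [exact: prime_gt0 | lia].
have pos : 0 < logn p (m.*2)`!.
  by rewrite logn_gt0 mem_primes pp fact_gt0 dvdn_fact //; lia.
lia.
Qed.

Definition pr N := \prod_(0 <= p < N | prime p) p.

Lemma pr_mono N1 N2 : N1 <= N2 -> pr N1 <= pr N2.
Proof.
move=> h; rewrite /pr (@big_cat_nat _ _ _ N1 0 N2) //=.
apply: leq_pmulr; apply: prodn_cond_gt0 => p; exact: prime_gt0.
Qed.

Lemma pr_step m : 0 < m -> pr m.*2.+1 <= pr m.+1 * 4 ^ m.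
Proof.
move=> m0; rewrite /pr (@big_cat_nat _ _ _ m.+1 0 m.*2.+1) //=; last by lia.
rewrite leq_mul2l; apply/orP; right.
apply: leq_trans (C_upper m).
rewrite [X in _ <= X](C_fact m m0).
rewrite (@big_cat_nat _ _ _ m.+1 0 m.*2.+1) //=; last by lia.
apply: leq_trans (_ : _ <= \prod_(m.+1 <= i < m.*2.+1 | prime i) i ^ logn i 'C(m.*2, m)) _.
  rewrite big_nat_cond [X in _ <= X]big_nat_cond.
  apply: leq_prod => p /andP[/andP[h1 h2] pp]; rewrite -{1}(expn1 p).
  apply: leq_pexp2l; first exact: prime_gt0.
  apply: logn_C_pos => //; lia.
apply: leq_pmull; apply: prodn_cond_gt0 => p pp; rewrite expn_gt0 prime_gt0 //.
Qed.

Arguments pr_mono {N1 N2}.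
Arguments pr_step {m}.

Lemma pr3 : pr 3 = 2.
Proof. by rewrite /pr unlock. Qed.

Lemma pr_bound N : pr N <= 4 ^ (N.*2).
Proof.
elim: N {-2}N (leqnn N) => [|K IH] N hN.
  have -> : N = 0 by lia.
  by rewrite /pr unlock.
case: (leqP N 3) => h3.
  case: (leqP N 2) => h2.
    apply: leq_trans (pr_mono h2) _.
    have -> : pr 2 = 1 by rewrite /pr unlock.
    by rewrite expn_gt0.
  have -> : N = 3 by lia.
  by rewrite pr3.
set m := N./2.
have hm : N <= m.*2.+1 by rewrite /m; have := odd_double_half N; case: odd => /=; lia.
have m0 : 0 < m by rewrite /m; lia.
apply: leq_trans (pr_mono hm) _.
apply: leq_trans (pr_step m0) _.
have := IH m.+1 ltac:(rewrite /m; lia).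
move=> h; apply: leq_trans (leq_mul h (leqnn _)) _.
rewrite -expnD; apply: leq_pexp2l => //; rewrite /m; lia.
Qed.

Lemma prod_const_cnt (s : seq nat) (P : pred nat) c :
  \prod_(i <- s | P i) c = c ^ count P s.
Proof.
elim: s => [|a s IH]; first by rewrite big_nil.
by rewrite big_cons IH /=; case: (P a); rewrite ?expnS.
Qed.

Lemma cheb m A r : 0 < m -> r <= A -> A <= m.*2 -> m.*2 < r * r ->
  2 ^ m <= (m.*2) ^ r * 4 ^ (A.*2) * (m.*2) ^ (count prime (index_iota A m.*2.+1)).
Proof.
move=> m0 rA Am rr.
apply: leq_trans (C_lower m) _.
rewrite (C_fact m m0).
rewrite (@big_cat_nat _ _ _ A 0 m.*2.+1) //=; last by lia.
rewrite (@big_cat_nat _ _ _ r 0 A) //=.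
have hC p : prime p -> p ^ logn p 'C(m.*2, m) <= m.*2 := fun pp => logn_C_le p m pp m0.
apply: leq_mul; first apply: leq_mul.
- apply: leq_trans (_ : _ <= \prod_(0 <= i < r | prime i) m.*2) _.
    by apply: leq_prod => p pp; apply: hC.
  rewrite prod_const_cnt; apply: leq_pexp2l; first by lia.
  by have := count_size prime (index_iota 0 r); rewrite /index_iota size_iota subn0.
- apply: leq_trans (pr_bound A).
  rewrite /pr (@big_cat_nat _ _ _ r 0 A) //=.
  apply: leq_trans (leq_pmull _ _) ; last first.
    apply: prodn_cond_gt0 => p; exact: prime_gt0.
  rewrite big_nat_cond [X in _ <= X]big_nat_cond.
  apply: leq_prod => p /andP[/andP[h1 h2] pp].
  have := hC p pp.
  case: (logn p _) => [|[|v]]; [by rewrite expn0 => _; exact: prime_gt0 | by rewrite expn1 | ].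
  move=> h; exfalso.
  have : p * p <= p ^ v.+2.
    by change (p ^ 2 <= p ^ v.+2); apply: leq_pexp2l; [exact: prime_gt0 | lia].
  have : r * r <= p * p by apply: leq_mul.
  lia.
- apply: leq_trans (_ : _ <= \prod_(A <= i < m.*2.+1 | prime i) m.*2) _.
    by apply: leq_prod => p pp; apply: hC.
  by rewrite prod_const_cnt.
Qed.

Lemma t_ge10 t : 0 < t -> 16 * (t * t) < 2 ^ t.+1 -> 10 <= t.
Proof.
case: (leqP 10 t) => // ht t0 h; exfalso; move: h t0.
by case: t ht => [|[|[|[|[|[|[|[|[|[|t]]]]]]]]]].
Qed.

Lemma pow_big t : 10 <= t -> 384 * (t.+1 * t.+1) <= 2 ^ (t.*2).
Proof.
elim: t => [|t IH] //.
case: (leqP 10 t) => h.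
  move=> _; have := IH h; rewrite doubleS !expnS; lia.
move=> h1; have -> : t = 9 by lia.
by [].
Qed.

Lemma cheb_stub : True. Proof. by []. Qed.

Lemma leq_expb a b e : a <= b -> a ^ e <= b ^ e.
Proof. move=> h; elim: e => [|e IH] //; rewrite !expnS; exact: leq_mul. Qed.

Lemma K_big d t : 10 <= t -> 0 < d -> d < 2 ^ t ->
  2 * d * t.+1 <= count prime (index_iota (16 * d * (t.+1 * t.+1))
                                  (24 * (16 * d * (t.+1 * t.+1))).+1).
Proof.
move=> ht d0 dt.
have hA : 384 * d * (t.+1 * t.+1) <= 2 ^ (t * 3).
  have -> : 2 ^ (t * 3) = 2 ^ t * 2 ^ (t.*2) by rewrite -expnD; congr (2 ^ _); lia.
  have -> : 384 * d * (t.+1 * t.+1) = d * (384 * (t.+1 * t.+1)) by lia.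
  apply: leq_mul; [exact: ltnW | exact: pow_big].
set A := 16 * d * (t.+1 * t.+1).
set K := count prime _.
case: (leqP (2 * d * t.+1) K) => // hK; exfalso.
set r := 22 * d * t.+1.
have m2 : (12 * A).*2 = 24 * A by lia.
have := @cheb (12 * A) A r.
rewrite m2 -/K.
move=> /(_ ltac:(rewrite /A; nia) ltac:(rewrite /r /A; nia) ltac:(lia) ltac:(rewrite /r /A; nia)).
have h24 : 24 * A <= 2 ^ (t * 3) by rewrite /A; lia.
have e1 : (24 * A) ^ r <= 2 ^ (t * 3 * r) by rewrite expnM; apply: leq_expb.
have e2 : (24 * A) ^ K <= 2 ^ (t * 3 * K) by rewrite expnM; apply: leq_expb.
have e3 : 4 ^ A.*2 = 2 ^ (4 * A) by rewrite [4 ^ _](_ : _ = (2 ^ 2) ^ A.*2) // -expnM; congr (2 ^ _); lia.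
rewrite e3 => h.
have := leq_trans h (leq_mul (leq_mul e1 (leqnn _)) e2).
rewrite -!expnD leq_exp2l // => h2.
move: h2 hK; rewrite /r /A; nia.
Qed.

Arguments Ms {T}.
Arguments Ms_sorted {T}.
Arguments Ms_range {T S x y i}.
Arguments Delta_p_ge {T S x y p s}.
Arguments HAM_size {T}.

Arguments in_range_lo {d n t p}.
Arguments in_range_hi {d n t p}.

Arguments leq_expb {a b} e.

Lemma prodn_expr (s : seq nat) (F : nat -> nat) k :
  (\prod_(i <- s) F i) ^ k = \prod_(i <- s) F i ^ k.
Proof.
elim: s => [|a s IH]; first by rewrite !big_nil exp1n.
by rewrite !big_cons expnMn IH.
Qed.

Lemma card_count N (P : pred nat) :
  #|[pred q : 'I_N | P q]| = count P (iota 0 N).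
Proof.
rewrite -sum1_card (@eq_bigl _ _ _ _ _ _ (fun i : 'I_N => P i)) //.
rewrite -(big_mkord (fun i => P i) (fun _ => 1)).
by rewrite sum1_count /index_iota subn0.
Qed.

Lemma arith1 d t u : 10 <= t -> t <= u -> 0 < d ->
  16 * d * (t.+1 * t.+1) + ((24 * (16 * d * (t.+1 * t.+1))).+1 - 16 * d * (t.+1 * t.+1))
  <= 544 * d * (u * u) + 1.
Proof. move=> h1 h2 h3; have : t * t <= u * u by apply: leq_mul. nia. Qed.

Lemma arith2 d t B K X : 0 < d -> 10 * (15 * B) <= t.+1 * (64 * d) ->
  2 * d * t.+1 <= K -> K <= X -> 4 * B <= X.
Proof. move=> h0 h1 h2 h3; set D := d * t.+1; have : t.+1 * (64 * d) = 64 * D by rewrite /D; lia. lia. Qed.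

Lemma arith3 d t i : 10 <= t ->
  i \in iota (16 * d * (t.+1 * t.+1)) ((24 * (16 * d * (t.+1 * t.+1))).+1 - 16 * d * (t.+1 * t.+1)) ->
  16 * d * (t.+1 * t.+1) <= i <= 384 * d * (t.+1 * t.+1).
Proof. rewrite mem_iota => h1 h2; set A := 16 * d * _ in h2 *; lia. Qed.

Lemma key (T : eqType) (S : nat -> T) n d x y : 1 <= d -> 1 <= x -> x < y -> y <= n ->
  2 * d <= HAM_rev S x y ->
  4 * #|[pred q : 'I_(prime_bound d n) | prime q && in_range d n q &&
                 (16 * Delta_p S x y q <= 17 * d)]| <=
      #|[pred q : 'I_(prime_bound d n) | prime q && in_range d n q]|.
Proof.
move=> d0 x0 xy yn H2.
set N := prime_bound d n.
set Bp := [pred q : 'I_N | _].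
set Pp := [pred q : 'I_N | _].
have n2 : 2 <= n by lia.
set t := trunc_log 2 n.
have ht : 2 ^ t <= n < 2 ^ t.+1 by rewrite trunc_logP ?trunc_log_ltn //; lia.
have t0 : 0 < t by rewrite trunc_log_gt0; lia.
have Hsz : HAM_rev S x y <= n.
  rewrite HAM_size /Ms size_filter; apply: leq_trans (count_size _ _) _.
  rewrite size_iota; lia.
have dt : d < 2 ^ t by have := expnS 2 t; lia.
case: (posnP #|Bp|) => [-> //|B0].
set Bs := [seq val q | q <- enum Bp].
have uB : uniq Bs by rewrite map_inj_uniq ?enum_uniq //; exact: val_inj.
have sB : size Bs = #|Bp| by rewrite size_map cardE.
have memB : forall q, q \in Bs ->
    [&& prime q, in_range d n q & 16 * Delta_p S x y q <= 17 * d].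
  move=> q /mapP[q' q'in ->]; rewrite mem_enum in q'in.
  by move: q'in; rewrite inE /= andbA.
have pB : all prime Bs by apply/allP => q /memB /and3P[].
set s := take (2 * d) (Ms S x y).
have ss : size s = 2 * d by rewrite size_takel // -HAM_size.
have sorted_s : sorted ltn s.
  exact: (subseq_sorted ltn_trans (take_subseq _ _) (Ms_sorted S x y)).
have sub : {subset s <= Ms S x y} by move=> i /mem_take.
have srange : forall i, i \in s -> x <= i <= y.
  by move=> i /sub; apply: Ms_range; lia.
have collB : forall q, q \in Bs -> 15 * d <= 16 * coll q s.
  move=> q /memB /and3P[pq _ hq].
  have := Delta_p_ge (prime_gt0 pq) sub.
  have := coll_bound q s sorted_s.
  rewrite ss; move: (size _) (coll q s) (Delta_p _ _ _ _) hq => a b c; lia.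
have t10 : 10 <= t.
  case E: Bs sB => [|q0 Bs'] sB; first by move: B0; rewrite -sB.
  have q0in : q0 \in Bs by rewrite E mem_head.
  have [a [b [ain bin ab hdiv]]] : exists a b, [/\ a \in s, b \in s, a < b & q0 %| b - a].
    apply: coll_pos => //; have := collB q0 q0in; lia.
  have := memB q0 q0in => /and3P[pq rq _].
  have := in_range_lo ht rq.
  have := dvdn_leq (_ : 0 < b - a) hdiv.
  have := srange a ain; have := srange b bin.
  move=> hb ha hq1 hq2; apply: t_ge10 => //.
  nia.
set L := 16 * d * (t * t).
have Lq : forall q, q \in Bs -> L <= q.
  by move=> q /memB /and3P[_ rq _]; exact: in_range_lo ht rq.
have P1 := prod_coll Bs s n uB pB sorted_s
  (fun i ii => leq_trans (proj2 (andP (srange i ii))) yn) (ltnW n2).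
rewrite ss in P1.
have P2 : L ^ (15 * d * size Bs) <= (\prod_(q <- Bs) q ^ coll q s) ^ 16.
  rewrite prodn_expr expnM -(count_predT Bs) -prod_const_cnt.
  rewrite big_seq_cond [X in _ <= X]big_seq_cond.
  apply: leq_prod => q /andP[qin _].
  apply: leq_trans (leq_expb _ (Lq q qin)) _.
  rewrite -expnM; apply: leq_pexp2l; first by have := Lq q qin; lia.
  have := collB q qin; lia.
have P3 := leq_trans P2 (leq_expb 16 P1).
rewrite -expnM in P3.
have P4 : (L ^ (15 * size Bs)) ^ d <= (n ^ (64 * d)) ^ d.
  have e1 : 15 * size Bs * d = 15 * d * size Bs by lia.
  have e2 : 64 * d * d = 2 * d * (2 * d) * 16 by lia.
  by rewrite -!expnM e1 e2.
rewrite leq_exp2r // in P4.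
have P5 : 2 ^ (10 * (15 * size Bs)) <= 2 ^ (t.+1 * (64 * d)).
  rewrite [2 ^ (10 * _)]expnM [2 ^ (t.+1 * _)]expnM.
  apply: (@leq_trans (L ^ (15 * size Bs))).
    apply: leq_expb; rewrite (_ : 2 ^ 10 = 1024) // /L.
    have : 100 <= t * t by nia.
    lia.
  apply: leq_trans P4 _; apply: leq_expb; lia.
rewrite leq_exp2l // sB in P5.
have KB := K_big d t t10 d0 dt.
set A := 16 * d * (t.+1 * t.+1) in KB.
set K := count prime _ in KB.
have XP : K <= #|Pp|.
  rewrite /Pp (card_count N (fun q => prime q && in_range d n q)).
  set len := (24 * A).+1 - A.
  have u1 : t <= up_log 2 n.
    have h := @up_logP 2 n (ltnSn 1).
    rewrite -(@leq_exp2l 2) //; exact: leq_trans (andP ht).1 h.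
  have hN : A + len <= N.
    rewrite /N /prime_bound /len /A (_ : up_log 2 n ^ 2 = up_log 2 n * up_log 2 n) //.
    exact: arith1.
  have E : iota 0 N = iota 0 A ++ (iota A len ++ iota (A + len) (N - (A + len))).
    rewrite -[X in iota 0 X](_ : A + (len + (N - (A + len))) = N); last by lia.
    by rewrite !iotaD add0n.
  rewrite E !count_cat.
  have -> : K = count (fun q => prime q && in_range d n q) (iota A len).
    rewrite /K /index_iota -/len; apply: eq_in_count => i.
    move=> hi /=.
    rewrite (in_range_hi ht t10) ?andbT //.
    move: hi; rewrite mem_iota /len /A; clear; lia.
  by rewrite addnCA leq_addr.
exact: (@arith2 d t _ K _ d0 P5 KB XP).
Qed.

Lemma max_le16 k (F : 'I_k -> nat) c :
  (16 * \max_(j < k) F j <= c) = [forall j, 16 * F j <= c].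
Proof.
rewrite mulnC -leq_divRL //.
apply/bigmax_leqP/forallP => h j.
  by rewrite mulnC -leq_divRL //; apply: h.
by move=> _; have := h j; rewrite mulnC -leq_divRL.
Qed.

Theorem lemma5p1 (T : eqType) (S : nat -> T) (n d x y : nat) :
  1 <= d -> 1 <= x -> x < y -> y <= n -> ~~ odd (y - x + 1) ->
  (HAM_rev S x y <= d ->
     forall f : {ffun 'I_(num_primes n) -> 'I_(prime_bound d n)},
       valid_choice d n f ->
       Delta S x y (fun j => nat_of_ord (f j)) <= d) /\
  (2 * d <= HAM_rev S x y ->
     (n ^ 3 - 1) * #|[set f | valid_choice d n f]|
     <= n ^ 3 * #|[set f | valid_choice d n f &&
                   (17 * d < 16 * Delta S x y (fun j => nat_of_ord (f j)))]|).
Proof.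
move=> d0 x0 xy yn _; split.
  move=> H f _; rewrite /Delta; apply/bigmax_leqP => j _.
  exact: leq_trans (Delta_p_le _ S x y _) H.
move=> H.
have K4 := key _ S n d x y d0 x0 xy yn H.
set N := prime_bound d n in K4 *.
set k := num_primes n.
set Bp := [pred q : 'I_N | _] in K4.
set Pp := [pred q : 'I_N | _] in K4.
have cv : #|[set f | valid_choice d n f]| = #|(@ffun_on 'I_k Pp)|.
  apply: eq_card => f; rewrite inE.
  by apply/forallP/ffun_onP => h j; have := h j.
have cg : #|[set f | valid_choice d n f &&
                   (17 * d < 16 * Delta S x y (fun j => nat_of_ord (f j)))]|
          = #|[predD (@ffun_on 'I_k Pp) & (@ffun_on 'I_k Bp)]|.
  apply: eq_card => f; rewrite !inE.
  have -> : valid_choice d n f = [forall j, f j \in Pp].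
    by apply: eq_forallb => j; rewrite inE.
  case hv: [forall j, f j \in Pp]; rewrite ?andbT ?andbF //=.
  rewrite ltnNge; congr (~~ _).
  rewrite /Delta max_le16; apply: eq_forallb => j.
  rewrite [in RHS]inE /=.
  by move/forallP: hv => /(_ j); rewrite inE => ->.
have cb : #|[predI (@ffun_on 'I_k Pp) & (@ffun_on 'I_k Bp)]| = #|(@ffun_on 'I_k Bp)|.
  apply: eq_card => f; rewrite !inE.
  apply/idP/idP => [/andP[_ ->] // | hB]; rewrite hB andbT.
  apply/forallP => j; move/forallP: hB => /(_ j); rewrite !inE => /andP[] //.
have cID := cardID ((@ffun_on 'I_k Bp)) ((@ffun_on 'I_k Pp)).
rewrite cb in cID.
rewrite cv cg !card_ffun_on card_ord in cID *.
have n2 : n ^ 2 <= 2 ^ k by apply: up_logP.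
have n3 : n ^ 3 <= 4 ^ k.
  apply: (@leq_trans ((n ^ 2) ^ 2)).
    rewrite -expnM; apply: leq_pexp2l => //; lia.
  rewrite (_ : 4 ^ k = (2 ^ k) ^ 2); first exact: leq_expb.
  by rewrite -expnM mulnC expnM.
have key2 : n ^ 3 * #|Bp| ^ k <= #|Pp| ^ k.
  apply: (@leq_trans (4 ^ k * #|Bp| ^ k)); first exact: leq_mul.
  rewrite -expnMn; exact: leq_expb.
move: cID key2; move: (n ^ 3) (#|Bp| ^ k) (#|Pp| ^ k) (#|[predD _ & _]|) => a v u g.
move=> e h; rewrite -e; nia.
Qed.
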